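(* Let $n\le d$, let $V=\operatorname{span}\{|ii\rangle: i\in[n]\}\subseteq\mathbb{C}^d\otimes\mathbb{C}^d$, let $\phi=\sum_{i=1}^n\phi_i|ii\rangle\in V$, and let $K=\sum_{i=1}^n|e_i\rangle\langle ii|$, where $\{e_i\}$ is the standard basis of $\mathbb{C}^n$. If $\rho\in\mathcal{F}_{\phi}$ is separable, then $Z^\Gamma_K(\rho)=K\rho^\Gamma K^*\in\operatorname{R}_1[\mathcal{M}_n^+[x]]$, where $x=(|\phi_1|^2,\dots,|\phi_n|^2)$.
   Context: $|ij\rangle=|i\rangle\otimes|j\rangle$ in the standard basis; $\rho^\Gamma$ is the partial transpose on the second factor. A bipartite PSD $\rho$ is separable if it is a finite sum $\sum_k|v_k\rangle\langle v_k|\otimes|w_k\rangle\langle w_k|$. With $P_V$ the orthogonal projection onto $V$, $\mathcal{F}_\phi=\{\rho\in(\mathcal{M}_d\otimes\mathcal{M}_d)^+ : P_V\rho P_V=\lambda|\phi\rangle\langle\phi| \text{ for some } \lambda\ge0\}$. For $x\in\mathbb{R}^n_+$, $\mathcal{M}_n^+[x]$ is the cone of $n\times n$ complex PSD matrices $X$ for which there exists $\lambda$ with $X_{ii}=\lambda x_i$ for all $i$. For a cone $\mathcal{C}\subseteq\mathcal{M}_n^+$, $\operatorname{R}_1[\mathcal{C}]$ is the convex cone generated by its rank-1 elements. *)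

(* Defs.v *)
(* Complex numbers: an arbitrary numClosedFieldType C
   (e.g. algC, or R[i] for R : rcfType). *)
From HB Require Import structures.
From mathcomp Require Import all_boot all_order all_algebra.
From mathcomp Require Import spectral.
From mathcomp.real_closed Require Import mxtens.
Set Implicit Arguments. Unset Strict Implicit. Unset Printing Implicit Defensive.
Import Order.TTheory GRing.Theory Num.Theory.
Local Open Scope ring_scope.
Local Open Scope sesquilinear_scope.

Section Defs.
Variable C : numClosedFieldType.

Definition adj m p (A : 'M[C]_(m, p)) : 'M[C]_(p, m) := A ^t*.

Definition psdmx m (A : 'M[C]_m) : Prop :=
  adj A = A /\ forall v : 'cV[C]_m, 0 <= (adj v *m A *m v) 0 0.

Definition ket d (i : 'I_d) : 'cV[C]_d := delta_mx i 0.

Definition ket2 d (i j : 'I_d) : 'cV[C]_(d * d) := ket i *t ket j.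

Definition separable d (rho : 'M[C]_(d * d)) : Prop :=
  exists s : seq ('cV[C]_d * 'cV[C]_d),
    rho = \sum_(vw <- s) ((vw.1 *m adj vw.1) *t (vw.2 *m adj vw.2)).

(* partial transpose on the second factor:
   rho^Gamma_{(i,j),(k,l)} = rho_{(i,l),(k,j)} *)
Definition ptrans d (rho : 'M[C]_(d * d)) : 'M[C]_(d * d) :=
  \matrix_(p, q)
    rho (mxtens_index ((mxtens_unindex p).1, (mxtens_unindex q).2))
        (mxtens_index ((mxtens_unindex q).1, (mxtens_unindex p).2)).

Variables (n d : nat) (hnd : (n <= d)%N).
Local Notation w i := (widen_ord hnd i).

Definition PV : 'M[C]_(d * d) :=
  \sum_(i < n) (ket2 (w i) (w i) *m adj (ket2 (w i) (w i))).

Definition phivec (phi : 'I_n -> C) : 'cV[C]_(d * d) :=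
  \sum_(i < n) phi i *: ket2 (w i) (w i).

Definition Fphi (phi : 'I_n -> C) (rho : 'M[C]_(d * d)) : Prop :=
  psdmx rho /\ exists lam : C, 0 <= lam /\
    PV *m rho *m PV = lam *: (phivec phi *m adj (phivec phi)).

Definition Kmx : 'M[C]_(n, d * d) :=
  \sum_(i < n) (ket i *m adj (ket2 (w i) (w i))).

Definition ZGammaK (rho : 'M[C]_(d * d)) : 'M[C]_n :=
  Kmx *m ptrans rho *m adj Kmx.

End Defs.

Definition Mplus (C : numClosedFieldType) n (x : 'I_n -> C) (X : 'M[C]_n) : Prop :=
  psdmx X /\ exists lam : C, lam \is Num.real /\ forall i, X i i = lam * x i.

Definition R1 (C : numClosedFieldType) n (cone : 'M[C]_n -> Prop) (X : 'M[C]_n) : Prop :=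
  exists s : seq (C * 'M[C]_n),
    (forall cM, cM \in s -> 0 <= cM.1 /\ cone cM.2 /\ \rank cM.2 = 1%N) /\
    X = \sum_(cM <- s) cM.1 *: cM.2.

(* Main.v *)
Require Import Defs.
From HB Require Import structures.
From mathcomp Require Import all_boot all_order all_algebra.
From mathcomp Require Import spectral.
From mathcomp.real_closed Require Import mxtens.
From mathcomp Require Import ring.
Set Implicit Arguments. Unset Strict Implicit.
Import Order.TTheory GRing.Theory Num.Theory.
Local Open Scope ring_scope.

Lemma psum_seq_eq0 (R : numDomainType) (T : eqType) (s : seq T) (F : T -> R) :
  (forall t, 0 <= F t) -> \sum_(t <- s) F t = 0 -> forall t, t \in s -> F t = 0.
Proof.
move=> F0; elim: s => [|a s IH] //; rewrite big_cons => /eqP.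
rewrite paddr_eq0 ?F0 ?sumr_ge0 // => /andP[/eqP Ha /eqP Hs] t.
by rewrite in_cons => /orP[/eqP->|/IH]; [| apply].
Qed.

Lemma key (C : numClosedFieldType) n (T : eqType) (s : seq T) (z : T -> 'I_n -> C)
  (phi : 'I_n -> C) (lam : C) :
  (forall i j, \sum_(t <- s) z t i * (z t j)^* = lam * phi i * (phi j)^*) ->
  forall t, t \in s -> exists c, forall i, z t i = c * phi i.
Proof.
move=> H t ts.
have step1 : forall i j, z t i * phi j = z t j * phi i.
  move=> i j.
  pose a u := z u i * phi j - z u j * phi i.
  have E : \sum_(u <- s) a u * (a u)^* = 0.
    have -> : \sum_(u <- s) a u * (a u)^* =
      (\sum_(u <- s) z u i * (z u i)^*) * (phi j * (phi j)^*)
      - (\sum_(u <- s) z u i * (z u j)^*) * (phi j * (phi i)^*)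
      - (\sum_(u <- s) z u j * (z u i)^*) * (phi i * (phi j)^*)
      + (\sum_(u <- s) z u j * (z u j)^*) * (phi i * (phi i)^*).
      rewrite !mulr_suml -!sumrB -big_split /=; apply: eq_bigr => u _.
      by rewrite /a rmorphB !rmorphM /=; ring.
    by rewrite !H; ring.
  have := psum_seq_eq0 (fun u => mul_conjC_ge0 (a u)) E ts.
  by move/eqP; rewrite mul_conjC_eq0 subr_eq0 => /eqP.
case: (pickP (fun j => phi j != 0)) => [j0 /= Hj0|Hn].
  exists (z t j0 / phi j0) => i.
  by rewrite mulrAC -step1 mulfK.
exists 0 => i; rewrite mul0r.
have Hd := H i i.
have /negbFE/eqP Hp := Hn i; rewrite Hp mulr0 mul0r in Hd.
have := psum_seq_eq0 (fun u => mul_conjC_ge0 (z u i)) Hd ts.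
by move/eqP; rewrite mul_conjC_eq0 => /eqP.
Qed.

Section E.
Variable C : numClosedFieldType.

Lemma adjE m p (A : 'M[C]_(m, p)) i j : adj A i j = (A j i)^*.
Proof. by rewrite /adj !mxE. Qed.

Lemma ketE d (i k : 'I_d) (z : 'I_1) : @ket C d i k z = (k == i)%:R.
Proof. by rewrite /ket mxE ord1 eqxx andbT. Qed.

Lemma ket2E d (a b : 'I_d) p (z : 'I_1) :
  @ket2 C d a b p z = (p == mxtens_index (a, b))%:R.
Proof.
case: (mxtens_indexP p) => i j.
rewrite /ket2 mxE !ketE mxtens_indexK /=.
rewrite (inj_eq (can_inj (@mxtens_indexK _ _))) xpair_eqE.
by case: (i == a); case: (j == b); rewrite ?mulr1 ?mulr0 ?mul1r ?mul0r.
Qed.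

Lemma rank1E m p (u : 'cV[C]_m) (v : 'cV[C]_p) i j : (u *m adj v) i j = u i 0 * (v j 0)^*.
Proof. by rewrite mxE big_ord1 adjE. Qed.
End E.

Section F.
Variable C : numClosedFieldType.
Variables (n d : nat) (hnd : (n <= d)%N).
Local Notation w i := (widen_ord hnd i).
Local Notation ii i := (mxtens_index (w i, w i)).

Lemma ii_eq (i k : 'I_n) : (ii i == ii k) = (i == k).
Proof.
rewrite (inj_eq (can_inj (@mxtens_indexK _ _))) xpair_eqE andbb.
by rewrite -val_eqE.

Qed.

Lemma sum_delta (F : 'I_n -> C) (i : 'I_n) :
  \sum_(k < n) (i == k)%:R * F k = F i.
Proof.
rewrite (bigD1 i) //= eqxx mul1r big1 ?addr0 // => k /negbTE.
by rewrite eq_sym => ->; rewrite mul0r.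
Qed.

Lemma sum_delta2 m (F : 'I_m -> C) (i : 'I_m) :
  \sum_(k < m) (k == i)%:R * F k = F i.
Proof.
rewrite (bigD1 i) //= eqxx mul1r big1 ?addr0 // => k /negbTE ->.
by rewrite mul0r.
Qed.

Lemma KmxE i p : Kmx C hnd i p = (p == ii i)%:R.
Proof.
rewrite /Kmx summxE.
under eq_bigr => k _ do rewrite rank1E ketE ket2E.
by rewrite (sum_delta (fun k => (p == ii k)%:R^*)) conjC_nat.
Qed.

Lemma Kconj (X : 'M[C]_(d * d)) i j :
  (Kmx C hnd *m X *m adj (Kmx C hnd)) i j = X (ii i) (ii j).
Proof.
rewrite mxE.
under eq_bigr => q _ do rewrite mxE adjE KmxE conjC_nat.
under eq_bigr => q _ do under eq_bigr => p _ do rewrite KmxE.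
under eq_bigr => q _ do rewrite (sum_delta2 (fun p => X p q)) mulrC.
exact: (sum_delta2 (fun q => X (ii i) q)).
Qed.

Lemma PVrow i q : PV C hnd (ii i) q = (q == ii i)%:R.
Proof.
rewrite /PV summxE.
under eq_bigr => k _ do rewrite rank1E !ket2E ii_eq conjC_nat.
exact: (sum_delta (fun k => (q == ii k)%:R)).
Qed.

Lemma PVcol i p : PV C hnd p (ii i) = (p == ii i)%:R.
Proof.
rewrite /PV summxE.
under eq_bigr => k _ do rewrite rank1E !ket2E [ii i == _]eq_sym ii_eq conjC_nat mulrC.
exact: (sum_delta2 (fun k => (p == ii k)%:R)).

Qed.

Lemma PXP (X : 'M[C]_(d * d)) i j :
  (PV C hnd *m X *m PV C hnd) (ii i) (ii j) = X (ii i) (ii j).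
Proof.
rewrite mxE.
under eq_bigr => q _ do rewrite mxE PVcol.
under eq_bigr => q _ do under eq_bigr => p _ do rewrite PVrow.
under eq_bigr => q _ do rewrite (sum_delta2 (fun p => X p q)) mulrC.
exact: (sum_delta2 (fun q => X (ii i) q)).
Qed.

Lemma phivecE (phi : 'I_n -> C) i : phivec hnd phi (ii i) 0 = phi i.
Proof.
rewrite /phivec summxE.
under eq_bigr => k _ do rewrite mxE ket2E ii_eq eq_sym.
under eq_bigr => k _ do rewrite mulrC. exact: (sum_delta2 phi).
Qed.


Lemma rhoE (s : seq ('cV[C]_d * 'cV[C]_d)) a b c e :
 (\sum_(vw <- s) ((vw.1 *m adj vw.1) *t (vw.2 *m adj vw.2))) (mxtens_index (a,b)) (mxtens_index (c,e))
 = \sum_(vw <- s) vw.1 a 0 * (vw.1 c 0)^* * (vw.2 b 0 * (vw.2 e 0)^*).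
Proof. by rewrite summxE; apply eq_bigr => vw _; rewrite tensmxE !rank1E. Qed.

Lemma adjM m p q (A : 'M[C]_(m, p)) (B : 'M[C]_(p, q)) : adj (A *m B) = adj B *m adj A.
Proof.
apply/matrixP => i j; rewrite adjE !mxE rmorph_sum; apply: eq_bigr => k _.
by rewrite !adjE rmorphM mulrC.
Qed.

Lemma adjK m p (A : 'M[C]_(m, p)) : adj (adj A) = A.
Proof. by apply/matrixP => i j; rewrite !adjE conjCK. Qed.

Lemma main (phi : 'I_n -> C) (rho : 'M[C]_(d * d)) :
  Fphi hnd phi rho -> separable rho ->
  R1 (Mplus (fun i => `|phi i| ^+ 2)) (ZGammaK hnd rho).
Proof.
move=> [_ [lam [_ Hl]]] [s Hs].
pose z := fun (vw : 'cV[C]_d * 'cV[C]_d) (i : 'I_n) => vw.1 (w i) 0 * vw.2 (w i) 0.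
pose u := fun (vw : 'cV[C]_d * 'cV[C]_d) (i : 'I_n) => vw.1 (w i) 0 * (vw.2 (w i) 0)^*.
have Hz : forall i j, \sum_(t <- s) z t i * (z t j)^* = lam * phi i * (phi j)^*.
  move=> i j; have := congr1 (fun M : 'M[C]_(d * d) => M (ii i) (ii j)) Hl.
  rewrite /= PXP Hs rhoE mxE rank1E !phivecE mulrA => <-.
  by apply: eq_bigr => vw _; rewrite /z rmorphM /=; ring.
pose U vw := (\col_i u vw i) *m adj (\col_i u vw i).
have HZ : ZGammaK hnd rho = \sum_(vw <- s) U vw.
  apply/matrixP => i j; rewrite /ZGammaK Kconj summxE /ptrans mxE !mxtens_indexK /= Hs rhoE.
  by apply: eq_bigr => vw _; rewrite rank1E !mxE /u !rmorphM /= conjCK; ring.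
exists [seq (1, U vw) | vw <- s & U vw != 0].
split.
  move=> cM /mapP [vw]; rewrite mem_filter => /andP [HU Hvw] -> /=.
  split => //; split; last first.
    apply/eqP; rewrite eqn_leq (leq_trans (mxrankM_maxl _ _) (rank_leq_col _)) /=.
    by rewrite lt0n mxrank_eq0.
  split.
    split.
      by apply/matrixP => i j; rewrite adjE !rank1E !mxE rmorphM /= conjCK mulrC.
    move=> v; rewrite /U mulmxA -mulmxA.
    have -> : adj (\col_i u vw i) *m v = adj (adj v *m \col_i u vw i) by rewrite adjM adjK.
    by rewrite rank1E mul_conjC_ge0.
  have [c Hc] := key Hz Hvw.
  exists (c * c^*); split; first by apply: ger0_real; exact: mul_conjC_ge0.
  move=> i; rewrite rank1E !mxE normCK.
  have -> : u vw i * (u vw i)^* = z vw i * (z vw i)^*.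
    by rewrite /u /z !rmorphM /= conjCK /=; ring.
  by rewrite Hc rmorphM; ring.
rewrite HZ big_map big_filter /= (bigID (fun vw => U vw != 0)) /=.
rewrite [X in _ + X = _]big1 ?addr0; first by apply: eq_bigr => vw _; rewrite scale1r.
by move=> vw /negbNE/eqP.
Qed.
End F.

Theorem mainTheorem9 (C : numClosedFieldType) (n d : nat) (hnd : (n <= d)%N)
    (phi : 'I_n -> C) (rho : 'M[C]_(d * d)) :
  Fphi hnd phi rho -> separable rho ->
  R1 (Mplus (fun i => `|phi i| ^+ 2)) (ZGammaK hnd rho).
Proof. exact: main. Qed.
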